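(* Every affine bijection $\sigma:\mathcal{G}_N\to\mathcal{G}_N$ maps the set $\mathcal{I}$ of Ising matrices onto $\mathcal{I}$.
   Context: $\mathcal{G}_N$ is the set of real symmetric positive semi-definite $N\times N$ matrices with unit diagonal; $\mathcal{I}\subseteq\mathcal{G}_N$ is the set of its rank-one elements, i.e. the matrices $\mathbf{s}\mathbf{s}^\top$ with $\mathbf{s}\in\{\pm1\}^N$. *)

(* Defs.v *)
From HB Require Import structures.
From mathcomp Require Import all_boot all_order all_algebra.
From mathcomp Require Import reals.
Set Implicit Arguments. Unset Strict Implicit. Unset Printing Implicit Defensive.
Import Order.TTheory GRing.Theory Num.Theory.
Local Open Scope ring_scope.

Section Defs.
Variables (R : realType) (N : nat).

Definition psd (A : 'M[R]_N) : Prop :=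
  forall x : 'cV[R]_N, 0 <= (x^T *m A *m x) ord0 ord0.

Definition elliptope (A : 'M[R]_N) : Prop :=
  A^T = A /\ psd A /\ (forall i : 'I_N, A i i = 1).

Definition ising (A : 'M[R]_N) : Prop :=
  exists s : 'cV[R]_N, (forall i : 'I_N, s i ord0 = 1 \/ s i ord0 = -1)
                       /\ A = s *m s^T.

Definition affine_bijection_elliptope (sigma : 'M[R]_N -> 'M[R]_N) : Prop :=
  (forall A, elliptope A -> elliptope (sigma A)) /\
  (forall A B, elliptope A -> elliptope B -> sigma A = sigma B -> A = B) /\
  (forall B, elliptope B -> exists2 A, elliptope A & sigma A = B) /\
  (forall A B (t : R), elliptope A -> elliptope B -> 0 <= t -> t <= 1 ->
     sigma (t *: A + (1 - t) *: B) = t *: sigma A + (1 - t) *: sigma B).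

End Defs.

(* Main.v *)
Require Import Defs.
From mathcomp Require Import all_boot all_order all_algebra.
From mathcomp Require Import reals.
From mathcomp Require Import ring lra.
Set Implicit Arguments. Unset Strict Implicit. Unset Printing Implicit Defensive.
Import Order.TTheory GRing.Theory Num.Theory.
Local Open Scope ring_scope.
Section S.
Variables (R : realType) (N : nat).
Implicit Types (M Y A B : 'M[R]_N) (u v : 'cV[R]_N).

Definition bf M u v := (u^T *m M *m v) ord0 ord0.

Lemma bfDl M u1 u2 v : bf M (u1 + u2) v = bf M u1 v + bf M u2 v.
Proof. by rewrite /bf linearD /= !mulmxDl mxE. Qed.
Lemma bfDr M u v1 v2 : bf M u (v1 + v2) = bf M u v1 + bf M u v2.
Proof. by rewrite /bf !mulmxDr mxE. Qed.
Lemma bfZl M c u v : bf M (c *: u) v = c * bf M u v.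
Proof. by rewrite /bf linearZ /= -!scalemxAl mxE. Qed.
Lemma bfZr M c u v : bf M u (c *: v) = c * bf M u v.
Proof. by rewrite /bf -!scalemxAr mxE. Qed.
Lemma bf_delta M k l : bf M (delta_mx k 0) (delta_mx l 0) = M k l.
Proof. by rewrite /bf trmx_delta -rowE -colE !mxE. Qed.

Lemma sym_entry M k l : M^T = M -> M l k = M k l.
Proof. by move=> H; rewrite -{1}H mxE. Qed.

Lemma entry_bound M k l : elliptope M -> -1 <= M k l <= 1.
Proof.
case=> Hs [Hp Hd].
have H c : 0 <= 1 + 2 * c * M k l + c * c.
  have := Hp (delta_mx k 0 + c *: delta_mx l 0).
  rewrite -/(bf _ _ _) bfDl !bfDr !bfZl !bfZr !bf_delta !Hd (sym_entry l k Hs).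
  move=> h; lra.
have := H 1; have := H (-1); move=> *; apply/andP; split; nra.
Qed.

Lemma G_convex A B t : elliptope A -> elliptope B -> 0 <= t -> t <= 1 ->
  elliptope (t *: A + (1 - t) *: B).
Proof.
case=> HsA [HpA HdA] [HsB [HpB HdB]] t0 t1; split; [|split].
- by rewrite linearD /= !linearZ /= HsA HsB.
- move=> x; rewrite mulmxDr mulmxDl -!scalemxAr -!scalemxAl.
  rewrite mxE (mxE _ (fun i j => t * _)) (mxE _ (fun i j => (1-t) * _)).
  have t2 : 0 <= 1 - t by lra.
  have := mulr_ge0 t0 (HpA x); have := mulr_ge0 t2 (HpB x); lra.
- by move=> i; rewrite !mxE HdA HdB; ring.
Qed.

Lemma ss_entry (s : 'cV[R]_N) k l : (s *m s^T) k l = s k ord0 * s l ord0.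
Proof. by rewrite mxE big_ord1 mxE. Qed.

Lemma ising_G A : ising A -> elliptope A.
Proof.
case=> s [Hs ->]; split; [|split].
- by rewrite trmx_mul trmxK.
- move=> x; rewrite !mulmxA -mulmxA -[x^T *m s]trmxK trmx_mul trmxK.
  rewrite mxE big_ord1 mxE; exact: sqr_ge0.
- by move=> i; rewrite ss_entry; case: (Hs i) => ->; ring.
Qed.

Lemma ising_or_line Y : elliptope Y ->
  ising Y \/ exists i j, `|Y i j| < 1.
Proof.
move=> HY; case: (boolP [exists i, exists j, `|Y i j| < 1]).
  by move=> /existsP [i /existsP [j H]]; right; exists i, j.
rewrite negb_exists => /forallP H; left.
have H1 k l : Y k l = 1 \/ Y k l = -1.
  have := H k; rewrite negb_exists => /forallP /(_ l); rewrite -leNgt => h.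
  have := entry_bound k l HY; case/andP => h1 h2.
  move: h; rewrite ler_normr; case/orP=> h; [left|right]; lra.
have Hs := HY; case: Hs => Hs [Hp Hd].
pose s : 'cV[R]_N := \col_k (if [pick i0 : 'I_N] is Some i0 then Y k i0 else 0).
exists s; split.
  move=> k; rewrite mxE; case: pickP => [i0 _|/(_ k) //]; exact: H1.
apply/matrixP=> k l; rewrite ss_entry !mxE.
case: pickP => [i0 _|/(_ k) //].
set a : R := Y k i0; set b : R := Y l i0; set c : R := Y k l.
have sq (x : R) : x = 1 \/ x = -1 -> x * x = 1 by case=> ->; ring.
have ha := sq _ (H1 k i0); have hb := sq _ (H1 l i0); have hc := sq _ (H1 k l).
have q := Hp (a *: delta_mx k 0 + b *: delta_mx l 0 + (-1) *: delta_mx i0 0).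
rewrite -/(bf _ _ _) !bfDl !bfDr !bfZl !bfZr !bf_delta !Hd in q.
rewrite (sym_entry k l Hs) (sym_entry k i0 Hs) (sym_entry l i0 Hs) -/a -/b -/c in q.
have habc : a * b * c = 1.
  have e : (a*b*c - 1) * (a*b*c + 1) = 0.
    have -> : (a*b*c - 1) * (a*b*c + 1) = (a*a)*(b*b)*(c*c) - 1 by ring.
    by rewrite ha hb hc; ring.
  move/eqP: e; rewrite mulf_eq0 => /orP [/eqP|/eqP] e; first lra.
  have : a * b * c = -1 by lra.
  rewrite -/a -/b in ha hb; move=> e2; exfalso; clear -q ha hb e2; nra.
have : (c - a * b) * (c - a * b) = 0.
  have -> : (c - a * b) * (c - a * b) = c * c - 2 * (a*b*c) + (a*a)*(b*b) by ring.
  by rewrite ha hb hc habc; ring.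
by move/eqP; rewrite mulf_eq0 orbb subr_eq0 => /eqP.
Qed.

Section Cons.
Variables (Y : 'M[R]_N) (i j : 'I_N).

Definition Pm : 'M[R]_N := \matrix_(k,l) (if k == i then (if l == i then 0 else Y i l)
   else if l == i then Y k i else 0).
Definition Qm : 'M[R]_N := \matrix_(k,l) (if k == i then (if l == i then 0 else Y j l)
   else if l == i then Y k j else 0).
Definition Cm (al be : R) := Y + (al - 1) *: Pm + be *: Qm.
Definition Mm (al be : R) : 'M[R]_N := \matrix_(a,b) ((a == b)%:R +
   (b == i)%:R * ((al - 1) * (a == i)%:R + be * (a == j)%:R)).

Lemma sum_delta (f : 'I_N -> R) c : \sum_b f b * (b == c)%:R = f c.
Proof.
rewrite (bigD1 c) //= eqxx mulr1 big1 ?addr0 // => b /negbTE ->; by rewrite mulr0.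
Qed.

Lemma sum_M al be (f : 'I_N -> R) l :
  \sum_b f b * Mm al be b l = f l + (l == i)%:R * ((al - 1) * f i + be * f j).
Proof.
under eq_bigr do rewrite mxE.
have E b : f b * ((b == l)%:R + (l == i)%:R * ((al - 1) * (b == i)%:R + be * (b == j)%:R))
  = f b * (b == l)%:R + ((l == i)%:R * (al - 1)) * (f b * (b == i)%:R)
    + ((l == i)%:R * be) * (f b * (b == j)%:R) by ring.
under eq_bigr do rewrite E.
by rewrite !big_split /= -!mulr_sumr !sum_delta; ring.
Qed.

Lemma YM al be a l : (Y *m Mm al be) a l =
   Y a l + (l == i)%:R * ((al - 1) * Y a i + be * Y a j).
Proof. by rewrite mxE sum_M. Qed.

Lemma MtYM al be k l : ((Mm al be)^T *m Y *m Mm al be) k l =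
  (Y *m Mm al be) k l + (k == i)%:R * ((al - 1) * (Y *m Mm al be) i l
     + be * (Y *m Mm al be) j l).
Proof.
rewrite -mulmxA mxE -(sum_M al be (fun a => (Y *m Mm al be) a l) k); apply: eq_bigr => a _; rewrite mxE; ring.
Qed.

Hypothesis HY : elliptope Y.

Lemma Cm_eq al be : al * al + 2 * al * be * Y i j + be * be = 1 ->
  Cm al be = (Mm al be)^T *m Y *m Mm al be.
Proof.
case: HY => Hs [Hp Hd] Hc.
apply/matrixP => k l; rewrite MtYM !YM /Cm !mxE.
case: (eqVneq k i) => [->|ki]; case: (eqVneq l i) => [->|li] //=.
- rewrite !Hd (sym_entry i j Hs).
  by transitivity (al * al + 2 * al * be * Y i j + be * be); [rewrite Hc|]; ring.
- ring.
- ring.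
- ring.
Qed.

Lemma Cm_G al be : al * al + 2 * al * be * Y i j + be * be = 1 ->
  elliptope (Cm al be).
Proof.
move=> Hc; have HY' := HY; case: HY' => Hs [Hp Hd].
split; [|split].
- by rewrite Cm_eq // !trmx_mul trmxK Hs mulmxA.
- move=> x; rewrite (Cm_eq Hc) (_ : x^T *m _ *m x = (Mm al be *m x)^T *m Y *m (Mm al be *m x)); [exact: Hp|]. by rewrite trmx_mul !mulmxA.
- move=> k; rewrite /Cm !mxE Hd; case: (k == i); ring.
Qed.

Lemma Cm_comb al be al1 be1 al2 be2 w c x :
  al + w * al2 = c + x * al1 -> be + w * be2 = x * be1 -> c + x = 1 + w ->
  Cm al be + w *: Cm al2 be2 = c *: Y + x *: Cm al1 be1.
Proof.
move=> h1 h2 h3; apply/matrixP => k l; rewrite /Cm !mxE.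
set p := (if _ then _ else _); set q := (if _ then _ else _).
rewrite (_ : al = c + x * al1 - w * al2); last by lra.
rewrite (_ : be = x * be1 - w * be2); last by lra.
rewrite (_ : c = 1 + w - x); last by lra.
ring.
Qed.

End Cons.

Definition config (X F1 F2 : 'M[R]_N) := forall e : R, 0 < e -> e <= 1 ->
  exists b : R, [/\ 0 < b, 2 * b * e <= 1 & exists Dp Dm, [/\ elliptope Dp, elliptope Dm,
    Dp + (b * (1 - e)) *: F2 = (1 - 2 * b * e) *: X + (b * (1 + e)) *: F1 &
    Dm + (b * (1 - e)) *: F1 = (1 - 2 * b * e) *: X + (b * (1 + e)) *: F2]].

Lemma line_at Y i j : elliptope Y -> `|Y i j| < 1 ->
  exists E1 E2, [/\ elliptope E1, elliptope E2, E1 <> E2 & config Y E1 E2].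
Proof.
move=> HY hr; have HY' := HY; case: HY' => Hs [Hp Hd].
set r : R := Y i j in hr *.
have [r1 r2] : -1 < r /\ r < 1 by move: hr; rewrite ltr_norml => /andP[].
have ij : i != j by apply/eqP => e; move: hr; rewrite /r e Hd normr1 ltxx.
have entry al be : Cm Y i j al be i j = al * r + be.
  have ji : (j == i) = false by rewrite eq_sym (negbTE ij).
  by rewrite /Cm !mxE eqxx ji Hd /r; ring.
exists (Cm Y i j 0 1), (Cm Y i j (2 * r) (-1)); split.
- by apply: Cm_G => //; ring.
- by apply: Cm_G => //; rewrite -/r; ring.
- move=> e; have := congr1 (fun M => M i j) e; rewrite /= !entry => e2.
  have : r * r = 1 by lra.
  move=> h; clear -h r1 r2; nra.
move=> eps e0 e1.
set den := eps * eps * (1 - r) + 1 + r.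
have den0 : 0 < den by rewrite /den; clear -e0 e1 r1 r2; nra.
set b := eps / den.
have hb : b * den = eps by rewrite /b divfK // gt_eqF.
have b0 : 0 < b by rewrite /b divr_gt0.
exists b; split => //.
  have : 2 * b * eps * den <= den.
    rewrite (_ : 2 * b * eps * den = 2 * eps * (b * den)); last by ring.
    rewrite hb /den.
    have h1 : 0 <= (1 + r) * (1 - eps * eps) by apply: mulr_ge0; clear -e0 e1 r1; nra.
    clear -h1; lra.
  by rewrite -{2}(mul1r den) ler_pM2r.
exists (Cm Y i j (1 - 2 * b * (r + eps * (1 - r))) (2 * b)).
exists (Cm Y i j (1 + 2 * b * (r - eps * (1 - r))) (- (2 * b))).
split.
- apply: Cm_G => //; rewrite -/r.
  transitivity (1 + 2 * b * (1 - r) * (2 * (b * den) - 2 * eps)); last by rewrite hb; ring.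
  rewrite /den; ring.
- apply: Cm_G => //; rewrite -/r.
  transitivity (1 + 2 * b * (1 - r) * (2 * (b * den) - 2 * eps)); last by rewrite hb; ring.
  rewrite /den; ring.
- by apply: Cm_comb; ring.
- by apply: Cm_comb; ring.
Qed.


Lemma rigid_entry (sg x1 x2 dp b e : R) : sg * sg = 1 -> 0 < b -> sg * dp <= 1 ->
  dp + b * (1 - e) * x2 = (1 - 2 * b * e) * sg + b * (1 + e) * x1 ->
  (1 + e) * (sg * x1) - (1 - e) * (sg * x2) <= 2 * e.
Proof.
move=> s2 b0 hd E.
have key : b * ((1 + e) * (sg * x1) - (1 - e) * (sg * x2) - 2 * e) = sg * dp - 1.
  rewrite (_ : dp = (1 - 2 * b * e) * sg + b * (1 + e) * x1 - b * (1 - e) * x2); last by lra.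
  transitivity ((1 - 2 * b * e) * (sg * sg) + b * (1 + e) * (sg * x1)
     - b * (1 - e) * (sg * x2) - 1); first by rewrite s2; ring.
  ring.
have : b * ((1 + e) * (sg * x1) - (1 - e) * (sg * x2) - 2 * e) <= 0 by rewrite key; lra.
rewrite pmulr_rle0 // => h; lra.
Qed.

Lemma pm1_bound (sg m : R) : (sg = 1 \/ sg = -1) -> -1 <= m <= 1 -> -1 <= sg * m <= 1.
Proof. by case=> -> /andP[h1 h2]; apply/andP; split; lra. Qed.

Lemma rigid X F1 F2 : ising X -> elliptope F1 -> elliptope F2 -> config X F1 F2 -> F1 = F2.
Proof.
case=> s [Hs ->] H1 H2 Hc; apply/matrixP => k l.
set sg : R := s k ord0 * s l ord0.
have sgpm : sg = 1 \/ sg = -1.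
  by rewrite /sg; case: (Hs k) => ->; case: (Hs l) => ->; [left|right|right|left]; ring.
have s2 : sg * sg = 1 by case: sgpm => ->; ring.
have bnd M : elliptope M -> -1 <= sg * M k l <= 1.
  by move=> HM; apply: pm1_bound => //; apply: entry_bound.
set f1 := sg * F1 k l; set f2 := sg * F2 k l.
have ineq e : 0 < e -> e <= 1 ->
    (1 + e) * f1 - (1 - e) * f2 <= 2 * e /\ (1 + e) * f2 - (1 - e) * f1 <= 2 * e.
  move=> e0 e1; have [b [b0 _ [Dp [Dm [HDp HDm Ep Em]]]]] := Hc e e0 e1.
  have := congr1 (fun M => M k l) Ep; have := congr1 (fun M => M k l) Em.
  rewrite /= !mxE !big_ord1 !mxE -/sg => E2 E1.
  split.
  - apply: (rigid_entry (dp := Dp k l) s2 b0) => //.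
    by have /andP[] := bnd _ HDp.
  - apply: (rigid_entry (dp := Dm k l) s2 b0) => //.
    by have /andP[] := bnd _ HDm.
have [h1l h1u] : -1 <= f1 /\ f1 <= 1 by have /andP[] := bnd _ H1.
have [h2l h2u] : -1 <= f2 /\ f2 <= 1 by have /andP[] := bnd _ H2.
have ef : f1 = f2.
  case: (ltgtP f1 f2) => // h.
  - have [] := ineq ((f2 - f1) / 8); [lra|lra|] => _ h'; exfalso.
    have : (f2 - f1) * (1 - (2 - f1 - f2) / 8) <= 0 by clear -h'; lra.
    rewrite pmulr_rle0; [lra|lra].
  - have [] := ineq ((f1 - f2) / 8); [lra|lra|] => h' _; exfalso.
    have : (f1 - f2) * (1 - (2 - f1 - f2) / 8) <= 0 by clear -h'; lra.
    rewrite pmulr_rle0; [lra|lra].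
transitivity ((sg * sg) * F1 k l); first by rewrite s2 mul1r.
by rewrite -mulrA -/f1 ef /f2 mulrA s2 mul1r.
Qed.


Lemma combo_iff (U1 U2 U3 U4 : 'M[R]_N) (b e : R) : 0 < b -> e <= 1 ->
  (U1 + (b * (1 - e)) *: U2 = (1 - 2 * b * e) *: U3 + (b * (1 + e)) *: U4) <->
  ((1 + b * (1 - e))^-1 *: U1 + (1 - (1 + b * (1 - e))^-1) *: U2 =
   ((1 - 2 * b * e) / (1 + b * (1 - e))) *: U3
     + (1 - (1 - 2 * b * e) / (1 + b * (1 - e))) *: U4).
Proof.
move=> b0 e1; set w := b * (1 - e).
have w0 : 0 <= w by rewrite /w; apply: mulr_ge0; lra.
have nz : 1 + w != 0 by apply/eqP; lra.
have F1 : (1 + w) *: ((1 + w)^-1 *: U1 + (1 - (1 + w)^-1) *: U2) = U1 + w *: U2.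
  by apply/matrixP => k l; rewrite !mxE; field.
have F2 : (1 + w) *: (((1 - 2 * b * e) / (1 + w)) *: U3
     + (1 - (1 - 2 * b * e) / (1 + w)) *: U4) = (1 - 2 * b * e) *: U3 + (b * (1 + e)) *: U4.
  apply/matrixP => k l; rewrite !mxE /w; field.
  by move: nz; rewrite /w.
split => E.
  by apply: (scalerI nz); rewrite F1 F2.
by rewrite -F1 -F2 E.
Qed.

Lemma combo_range (b e : R) : 0 < b -> 0 < e -> e <= 1 -> 2 * b * e <= 1 ->
  [/\ 0 <= (1 + b * (1 - e))^-1, (1 + b * (1 - e))^-1 <= 1,
      0 <= (1 - 2 * b * e) / (1 + b * (1 - e)) &
      (1 - 2 * b * e) / (1 + b * (1 - e)) <= 1].
Proof.
move=> b0 e0 e1 be; set w := b * (1 - e).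
have w0 : 0 <= w by rewrite /w; apply: mulr_ge0; lra.
have p : 0 < 1 + w by lra.
split.
- by rewrite invr_ge0; lra.
- rewrite invr_le1 //; [lra|by rewrite unitfE; apply/eqP; lra].
- by apply: divr_ge0; lra.
- rewrite ler_pdivrMr // mul1r /w; nra.
Qed.

Section Sigma.
Variable sigma : 'M[R]_N -> 'M[R]_N.
Hypothesis Hs : affine_bijection_elliptope sigma.

Lemma transport_img Y E1 E2 : elliptope Y -> elliptope E1 -> elliptope E2 ->
  config Y E1 E2 -> config (sigma Y) (sigma E1) (sigma E2).
Proof.
case: Hs => Hmap [Hinj [Hsurj Haff]] HY H1 H2 Hc e e0 e1.
have [b [b0 be [Dp [Dm [HDp HDm Ep Em]]]]] := Hc e e0 e1.
have [r1 r2 r3 r4] := combo_range b0 e0 e1 be.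
exists b; split => //; exists (sigma Dp), (sigma Dm); split; try exact: Hmap.
- apply/combo_iff => //; rewrite -!Haff //.
  by move/(combo_iff _ _ _ _ b0 e1): Ep => ->.
- apply/combo_iff => //; rewrite -!Haff //.
  by move/(combo_iff _ _ _ _ b0 e1): Em => ->.
Qed.

Lemma transport_pre A F1 F2 : elliptope A -> elliptope F1 -> elliptope F2 ->
  config (sigma A) (sigma F1) (sigma F2) -> config A F1 F2.
Proof.
case: Hs => Hmap [Hinj [Hsurj Haff]] HA H1 H2 Hc e e0 e1.
have [b [b0 be [Dp [Dm [HDp HDm Ep Em]]]]] := Hc e e0 e1.
have [r1 r2 r3 r4] := combo_range b0 e0 e1 be.
have [Dp' HDp' eDp] := Hsurj _ HDp.
have [Dm' HDm' eDm] := Hsurj _ HDm.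
rewrite -eDp in Ep; rewrite -eDm in Em.
exists b; split => //; exists Dp', Dm'; split => //.
- apply/combo_iff => //; apply: Hinj; try apply: G_convex => //.
  by rewrite !Haff //; move/(combo_iff _ _ _ _ b0 e1): Ep.
- apply/combo_iff => //; apply: Hinj; try apply: G_convex => //.
  by rewrite !Haff //; move/(combo_iff _ _ _ _ b0 e1): Em.
Qed.

Lemma fwd A : ising A -> ising (sigma A).
Proof.
move=> HA; have HA' := ising_G HA.
have [Hmap [Hinj [Hsurj Haff]]] := Hs.
case: (ising_or_line (Hmap _ HA')) => // [[i [j h]]].
have [E1 [E2 [H1 H2 neq Hc]]] := line_at (Hmap _ HA') h.
have [F1 HF1 e1] := Hsurj _ H1; have [F2 HF2 e2] := Hsurj _ H2.
rewrite -e1 -e2 in Hc neq.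
have := rigid HA HF1 HF2 (transport_pre HA' HF1 HF2 Hc).
by move=> e; case: neq; rewrite e.
Qed.

Lemma bwd B : ising B -> exists2 A, ising A & sigma A = B.
Proof.
move=> HB; have HB' := ising_G HB.
have [Hmap [Hinj [Hsurj Haff]]] := Hs.
have [A HA eA] := Hsurj _ HB'; exists A => //.
case: (ising_or_line HA) => // [[i [j h]]].
have [E1 [E2 [H1 H2 neq Hc]]] := line_at HA h.
have := transport_img HA H1 H2 Hc; rewrite eA => Hc'.
have := rigid HB (Hmap _ H1) (Hmap _ H2) Hc'.
by move/(Hinj _ _ H1 H2).
Qed.

End Sigma.
End S.

Theorem lemma5 (R : realType) (N : nat) (sigma : 'M[R]_N -> 'M[R]_N) :
  affine_bijection_elliptope sigma ->
  (forall A, ising A -> ising (sigma A)) /\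
  (forall B, ising B -> exists2 A, ising A & sigma A = B).
Proof. by move=> H; split; [exact: fwd | exact: bwd]. Qed.
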